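(* Let $U=\begin{pmatrix} a & b\\ c & d\end{pmatrix}$ be a $2\times 2$ unitary matrix with $abcd\neq 0$, let $\varphi={}^t[\alpha,\beta]\in\mathbf{C}^2$ with $|\alpha|^2+|\beta|^2=1$, and let $X_n^{\varphi}$ be the position at time $n$ of the one-dimensional quantum random walk determined by $U$ started from $\varphi$ (defined in the context). Let $n\ge 1$ and $m\ge 1$ be integers, and write $\Re_\varphi = a\alpha\overline{b\beta}+\overline{a\alpha}b\beta$ and, for $1\le k$, $1\le \gamma,\delta\le k$, $$C_{k,\gamma,\delta}=\left(-\frac{|b|^2}{|a|^2}\right)^{\gamma+\delta}\binom{k-1}{\gamma-1}\binom{k-1}{\delta-1}\binom{n-k-1}{\gamma-1}\binom{n-k-1}{\delta-1}.$$ (i) If $m$ is odd, then $$E\big((X_n^{\varphi})^m\big)=|a|^{2(n-1)}\Big[-n^m\big\{(|a|^2-|b|^2)(|\alpha|^2-|\beta|^2)+2\Re_\varphi\big\}\Big]+\sum_{k=1}^{\lfloor (n-1)/2\rfloor}\sum_{\gamma=1}^{k}\sum_{\delta=1}^{k}C_{k,\gamma,\delta}\,\frac{(n-2k)^{m+1}}{\gamma\delta}\Big[-\{n(|a|^2-|b|^2)+\gamma+\delta\}(|\alpha|^2-|\beta|^2)+\Big(\frac{\gamma+\delta}{|b|^2}-2n\Big)\Re_\varphi\Big].$$ (ii) If $m$ is even, then $$E\big((X_n^{\varphi})^m\big)=|a|^{2(n-1)}\Big[n^m+\sum_{k=1}^{\lfloor (n-1)/2\rfloor}\sum_{\gamma=1}^{k}\sum_{\delta=1}^{k}C_{k,\gamma,\delta}\,\frac{(n-2k)^{m}}{\gamma\delta}\Big\{(n-k)^2+k^2-n(\gamma+\delta)+\frac{2\gamma\delta}{|b|^2}\Big\}\Big].$$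 In particular, for even $m$, $E((X_n^{\varphi})^m)$ does not depend on $\varphi$.
   Context: Quantum random walk on $\mathbf{Z}$ determined by a $2\times2$ unitary matrix $U=\begin{pmatrix} a & b\\ c & d\end{pmatrix}$: set $P=\begin{pmatrix} a & b\\ 0&0\end{pmatrix}$, $Q=\begin{pmatrix} 0&0\\ c & d\end{pmatrix}$ (so $U=P+Q$). Given an initial qubit state $\varphi={}^t[\alpha,\beta]\in\mathbf{C}^2$ with $|\alpha|^2+|\beta|^2=1$, define amplitudes $\Psi_k(n)\in\mathbf{C}^2$ ($k\in\mathbf{Z}$, $n\ge0$) by $\Psi_0(0)=\varphi$, $\Psi_k(0)=0$ for $k\neq0$, and $\Psi_k(n+1)=P\Psi_{k+1}(n)+Q\Psi_{k-1}(n)$. The random variable $X_n^{\varphi}$ takes value $k$ with probability $P(X_n^{\varphi}=k)=\|\Psi_k(n)\|^2$ (Euclidean norm squared); unitarity of $U$ makes this a probability distribution. $\lfloor x\rfloor$ is the integer part, $\overline{z}$ the complex conjugate. *)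

(* Defs.v *)
(* Complex numbers are  R[i] = complex R  for a real closed
   field R (e.g. the real numbers); the statement is purely algebraic. *)
From HB Require Import structures.
From mathcomp Require Import all_boot all_order all_algebra.
From mathcomp Require Import complex.
Set Implicit Arguments. Unset Strict Implicit. Unset Printing Implicit Defensive.
Import Order.TTheory GRing.Theory Num.Theory.
Local Open Scope ring_scope.

Section QW.
Variable R : rcfType.
Local Notation C := (R[i]).

Definition unitary (U : 'M[C]_2) : Prop :=
  U *m (map_mx Num.conj U)^T = 1%:M.

Definition Pmat (U : 'M[C]_2) : 'M[C]_2 :=
  \matrix_(i < 2, j < 2) if i == 0 then U i j else 0.
Definition Qmat (U : 'M[C]_2) : 'M[C]_2 :=
  \matrix_(i < 2, j < 2) if i == 1 then U i j else 0.

Fixpoint Psi (U : 'M[C]_2) (phi : 'cV[C]_2) (n : nat) : int -> 'cV[C]_2 :=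
  match n with
  | 0 => fun k => if k == 0 then phi else 0
  | n'.+1 => fun k => Pmat U *m Psi U phi n' (k + 1) + Qmat U *m Psi U phi n' (k - 1)
  end.

Definition prob (U : 'M[C]_2) (phi : 'cV[C]_2) (n : nat) (k : int) : C :=
  \sum_(i < 2) `|Psi U phi n k i 0| ^+ 2.

(* sum of k^m P(X_n = k) over the window -N <= k <= N *)
Definition moment_window (U : 'M[C]_2) (phi : 'cV[C]_2) (n m N : nat) : C :=
  \sum_(j < (N + N).+1) (((j%:Z - N%:Z)%:~R : C) ^+ m) * prob U phi n (j%:Z - N%:Z).

Definition qubit (alpha beta : C) : 'cV[C]_2 :=
  \col_(i < 2) if i == 0 then alpha else beta.

Definition Ccoef (a b : C) (n k g d : nat) : C :=
  (- (`|b| ^+ 2 / `|a| ^+ 2)) ^+ (g + d) *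
  ('C(k.-1, g.-1) * 'C(k.-1, d.-1) * 'C(n - k - 1, g.-1) * 'C(n - k - 1, d.-1))%:R.

Definition Rephi (a b alpha beta : C) : C :=
  a * alpha * (b * beta)^* + (a * alpha)^* * b * beta.

Definition odd_moment (a b alpha beta : C) (n m : nat) : C :=
  let A := `|a| ^+ 2 in let B := `|b| ^+ 2 in
  let D := `|alpha| ^+ 2 - `|beta| ^+ 2 in let Re := Rephi a b alpha beta in
  A ^+ n.-1 *
  ( - (n%:R ^+ m) * ((A - B) * D + 2 * Re)
    + \sum_(1 <= k < ((n - 1)./2).+1) \sum_(1 <= g < k.+1) \sum_(1 <= d < k.+1)
        Ccoef a b n k g d * ((n - 2 * k)%:R ^+ m.+1 / (g * d)%:R) *
        ( - (n%:R * (A - B) + (g + d)%:R) * D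
          + ((g + d)%:R / B - 2 * n%:R) * Re)).

Definition even_moment (a b : C) (n m : nat) : C :=
  let A := `|a| ^+ 2 in let B := `|b| ^+ 2 in
  A ^+ n.-1 *
  ( n%:R ^+ m
    + \sum_(1 <= k < ((n - 1)./2).+1) \sum_(1 <= g < k.+1) \sum_(1 <= d < k.+1)
        Ccoef a b n k g d * ((n - 2 * k)%:R ^+ m / (g * d)%:R) *
        ((n - k)%:R ^+ 2 + k%:R ^+ 2 - n%:R * (g + d)%:R + 2 * (g * d)%:R / B)).

End QW.

(* Main.v *)
Require Import Defs.
From HB Require Import structures.
From mathcomp Require Import all_boot all_order all_algebra.
From mathcomp Require Import complex.
From mathcomp Require Import ring lra zify.
Set Implicit Arguments. Unset Strict Implicit. Unset Printing Implicit Defensive.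
Import Order.TTheory GRing.Theory Num.Theory.
Local Open Scope ring_scope.

Section Alg.
Variable F : fieldType.
Variables a b c d u v : F.
Hypotheses (a0 : a != 0) (b0 : b != 0) (c0 : c != 0) (d0 : d != 0).

Definition rho := b * c / (a * d).
Definition S0 K l r := \sum_(g < K) rho ^+ g.+1 * ('C(l.-1, g) * 'C(r.-1, g))%:R.
Definition S1 K l r := \sum_(g < K) rho ^+ g.+1 * ('C(l.-1, g.+1) * 'C(r.-1, g))%:R.
Definition S2 K l r := \sum_(g < K) rho ^+ g.+1 * ('C(l.-1, g) * 'C(r.-1, g.+1))%:R.
Definition Y1 K l r := a ^+ l.-1 * d ^+ r * (u * S1 K l r + a / c * v * S0 K l r).
Definition Y2 K l r := a ^+ l * d ^+ r.-1 * (v * S2 K l r + d / b * u * S0 K l r).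

Lemma S1_l K l r : S1 K l.+2 r = S1 K l.+1 r + S0 K l.+1 r.
Proof.
rewrite /S1 /S0 -big_split; apply: eq_bigr => g _ /=.
by rewrite binS mulnDl natrD mulrDr.
Qed.

Lemma S2_r K l r : S2 K l r.+2 = S2 K l r.+1 + S0 K l r.+1.
Proof.
rewrite /S2 /S0 -big_split; apply: eq_bigr => g _ /=.
by rewrite binS mulnDr natrD mulrDr.
Qed.

Lemma S0_l K l r : (r <= K)%N -> S0 K l.+2 r = S0 K l.+1 r + rho * S2 K l.+1 r.
Proof.
case: K => [|K] hr.
  by rewrite /S0 /S2 !big_ord0 mulr0 addr0.
rewrite /S0 /S2 /= big_ord_recl [in RHS]big_ord_recl [X in _ = _ + rho * X]big_ord_recr /=.
rewrite (bin_small (n := r.-1) (m := K.+1)) ?muln0 ?mulr0 ?addr0; last by case: r hr.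
rewrite !bin0 /bump /= mulr_sumr -addrA -big_split /=; congr (_ + _).
apply: eq_bigr => i _ /=.
by rewrite add1n binS mulnDl natrD mulrDr [in X in _ = _ + X]mulrA -exprS addrC.
Qed.

Lemma S0_r K l r : (l <= K)%N -> S0 K l r.+2 = S0 K l r.+1 + rho * S1 K l r.+1.
Proof.
case: K => [|K] hr.
  by rewrite /S0 /S1 !big_ord0 mulr0 addr0.
rewrite /S0 /S1 /= big_ord_recl [in RHS]big_ord_recl [X in _ = _ + rho * X]big_ord_recr /=.
rewrite (bin_small (n := l.-1) (m := K.+1)) ?mul0n ?mulr0 ?addr0; last by case: l hr.
rewrite !bin0 /bump /= mulr_sumr -addrA -big_split /=; congr (_ + _).
apply: eq_bigr => i _ /=.
by rewrite add1n binS mulnDr natrD mulrDr [in X in _ = _ + X]mulrA -exprS addrC.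
Qed.

Lemma S1_1 K r : S1 K 1 r = 0.
Proof. by rewrite /S1 big1 // => g _ /=; rewrite (bin_small (n := 0)) // mul0n mulr0. Qed.
Lemma S2_1 K l : S2 K l 1 = 0.
Proof. by rewrite /S2 big1 // => g _ /=; rewrite (bin_small (n := 0) (m := g.+1)) // muln0 mulr0. Qed.
Lemma S0_1l K r : S0 K.+1 1 r = rho.
Proof.
rewrite /S0 big_ord_recl big1 /= ?bin0 ?mulr1 ?addr0 // => i _.
by rewrite (bin_small (n := 0)) // mul0n mulr0.
Qed.
Lemma S0_1r K l : S0 K.+1 l 1 = rho.
Proof.
rewrite /S0 big_ord_recl big1 /= ?bin0 ?mulr1 ?addr0 // => i _.
by rewrite (bin_small (n := 0) (m := i.+1)) // muln0 mulr0.
Qed.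

Lemma Y1_rec K l r : (0 < l)%N -> (0 < r)%N -> (r <= K)%N ->
  Y1 K l.+1 r = a * Y1 K l r + b * Y2 K l r.
Proof.
case: l => // l _; case: r => // r _ hr.
rewrite /Y1 /Y2 S1_l S0_l //= !exprS /rho.
field.
by rewrite a0 c0 d0 b0.
Qed.

Lemma Y2_rec K l r : (0 < l)%N -> (0 < r)%N -> (l <= K)%N ->
  Y2 K l r.+1 = c * Y1 K l r + d * Y2 K l r.
Proof.
case: l => // l _; case: r => // r _ hr.
rewrite /Y1 /Y2 S2_r S0_r //= !exprS /rho.
field.
by rewrite a0 c0 d0 b0.
Qed.

Lemma Y1_base K r : Y1 K.+1 1 r.+1 = b * (d ^+ r * v).
Proof.
rewrite /Y1 S1_1 S0_1l /= exprS /rho; field.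
by rewrite a0 c0 d0.
Qed.

Lemma Y2_base K l : Y2 K.+1 l.+1 1 = c * (a ^+ l * u).
Proof.
rewrite /Y2 S2_1 S0_1r /= exprS /rho; field.
by rewrite a0 b0 d0.
Qed.
End Alg.

Section Gen.
Variable F : fieldType.
Definition Egen (a a' b b' c c' d d' al al' be be' L Rr g h : F) :=
  ((a*al+b*be)*((L-g)/g) + a/c*(c*al+d*be)) * ((a'*al'+b'*be')*((L-h)/h) + a'/c'*(c'*al'+d'*be'))
  + ((c*al+d*be)*((Rr-g)/g) + d/b*(a*al+b*be)) * ((c'*al'+d'*be')*((Rr-h)/h) + d'/b'*(a'*al'+b'*be')).

Variables (a a' b b' c c' d d' al al' be be' Dl : F).
Hypotheses (a0 : a != 0) (b0 : b != 0) (b'0 : b' != 0) (D0 : Dl != 0).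
Hypotheses (ha' : a' = (1 - b * b') / a) (hc : c = - Dl * b') (hd : d = Dl * a')
  (hc' : c' = - b / Dl) (hd' : d' = a / Dl).

Lemma even_gen L Rr g h : g != 0 -> h != 0 -> al * al' + be * be' = 1 ->
  Egen a a' b b' c c' d d' al al' be be' L Rr g h + Egen a a' b b' c c' d d' al al' be be' L Rr h g
  + Egen a a' b b' c c' d d' al al' be be' Rr L g h + Egen a a' b b' c c' d d' al al' be be' Rr L h g
  = 2 * ((Rr ^+ 2 + L ^+ 2 - (L + Rr) * (g + h) + 2 * (g * h) / (b * b')) / (g * h)).
Proof.
move=> g0 h0 hn; rewrite -[X in _ = X]mulr1 -[X in _ = _ * X]hn /Egen hc hd hc' hd' ha'.
field; by rewrite ?oppr_eq0 ?b'0 ?b0 ?h0 ?g0 ?a0 ?D0.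
Qed.

Lemma odd_gen L Rr g h : g != 0 -> h != 0 ->
  Egen a a' b b' c c' d d' al al' be be' L Rr g h + Egen a a' b b' c c' d d' al al' be be' L Rr h g
  - Egen a a' b b' c c' d d' al al' be be' Rr L g h - Egen a a' b b' c c' d d' al al' be be' Rr L h g
  = 2 * ((Rr - L) * (- ((L + Rr) * (a * a' - b * b') + (g + h)) * (al * al' - be * be')
      + ((g + h) / (b * b') - 2 * (L + Rr)) * (a * al * (b' * be') + a' * al' * (b * be))) / (g * h)).
Proof.
move=> g0 h0; rewrite /Egen hc hd hc' hd' ha'.
field; by rewrite ?oppr_eq0 ?b'0 ?b0 ?h0 ?g0 ?a0 ?D0.
Qed.

Lemma edge_even : al * al' + be * be' = 1 ->
  (a*al+b*be) * (a'*al'+b'*be') + (c*al+d*be) * (c'*al'+d'*be') = 1.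
Proof.
move=> hn; rewrite -[RHS]hn hc hd hc' hd' ha'.
field; by rewrite ?oppr_eq0 ?b'0 ?b0 ?h0 ?g0 ?a0 ?D0.
Qed.

Lemma edge_odd :
  (c*al+d*be) * (c'*al'+d'*be') - (a*al+b*be) * (a'*al'+b'*be') =
  - ((a * a' - b * b') * (al * al' - be * be') + 2 * (a * al * (b' * be') + a' * al' * (b * be))).
Proof.
rewrite hc hd hc' hd' ha'.
field; by rewrite ?oppr_eq0 ?b'0 ?b0 ?h0 ?g0 ?a0 ?D0.
Qed.
End Gen.

Section Win.
Variable C : nmodType.

Lemma window (gf : int -> C) N : \sum_(j < (N + N).+1) gf (j%:Z - N%:Z) =
  gf 0 + \sum_(x < N) (gf (x.+1)%:Z + gf (- (x.+1)%:Z)).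
Proof.
elim: N => [|N IH].
  by rewrite big_ord_recl !big_ord0 /= addr0.
rewrite addSn addnS big_ord_recl big_ord_recr /= [in RHS]big_ord_recr /=.
rewrite (eq_bigr (fun j : 'I_(N + N).+1 => gf (j%:Z - N%:Z))); last first.
  by move=> j _; congr gf; rewrite /bump /=; lia.
rewrite IH (_ : (0%:Z - N.+1%:Z) = - N.+1%:Z); last by lia.
rewrite (_ : ((bump 0 (N + N).+1)%:Z - N.+1%:Z) = N.+1%:Z); last by rewrite /bump /=; lia.
by rewrite addrC -!addrA.
Qed.

Lemma pairing (h : nat -> C) n : (0 < n)%N -> (forall x, odd (n + x) -> h x = 0) ->
  \sum_(x < n) h x.+1 = \sum_(k < ((n - 1)./2).+1) h (n - 2 * k)%N.
Proof.
case: n => [//|n] _.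
suff: forall j, (forall x, odd (j.+1 + x) -> h x = 0) -> \sum_(x < j.+1) h x.+1 = \sum_(k < (j./2).+1) h (j.+1 - 2 * k)%N.
  by move=> H; rewrite subn1 /=; apply: H.
move=> j; elim: j {-2}j (leqnn j) => [|M IH] j hj hp.
  by move: hj; rewrite leqn0 => /eqP ->; rewrite !big_ord_recl !big_ord0.
case: j hj hp => [|[|j]] hj hp.
- by rewrite !big_ord_recl !big_ord0.
- rewrite !big_ord_recr !big_ord0 /= hp ?add0r //.
- rewrite [in LHS]big_ord_recr [in LHS]big_ord_recr /= (hp j.+2) ?addr0; last by rewrite oddD /=; case: (odd j).
  rewrite IH; [|lia|]; last by move=> x hx; apply: hp; rewrite (_ : (j.+3 + x = (j.+1 + x).+2)%N) //= negbK.
  rewrite [RHS]big_ord_recl /= muln0 subn0; rewrite addrC; congr (_ + _).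
  by apply: eq_bigr => k _; congr h; rewrite /bump /=; lia.
Qed.
End Win.

Section QWP.
Variable R : rcfType.
Local Notation C := R[i].
Variable U : 'M[C]_2.
Variables (al be : C).
Local Notation a := (U 0 0).
Local Notation b := (U 0 1).
Local Notation c := (U 1 0).
Local Notation d := (U 1 1).
Local Notation phi := (qubit al be).
Local Notation u := (a * al + b * be).
Local Notation v := (c * al + d * be).
Local Notation Ps := (Psi U phi).

Lemma sum2 (F : 'I_2 -> C) : \sum_(i < 2) F i = F 0 + F 1.
Proof. rewrite big_ord_recl big_ord_recl big_ord0 addr0; congr (_ + F _); exact: val_inj. Qed.

Lemma ord2 (i : 'I_2) : i = 0 \/ i = 1.
Proof. case: i => [[|[|m]]] h; [left|right|] => //; exact: val_inj. Qed.

Lemma qubit00 (x y : C) : qubit x y 0 0 = x. Proof. by rewrite mxE. Qed.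
Lemma qubit10 (x y : C) : qubit x y 1 0 = y. Proof. by rewrite mxE. Qed.

Lemma qubitE (w : 'cV[C]_2) : w = qubit (w 0 0) (w 1 0).
Proof.
apply/matrixP => i j; rewrite !mxE (ord1 j).
by case: (ord2 i) => ->.
Qed.

Lemma qubit_add (x y x' y' : C) : qubit x y + qubit x' y' = qubit (x + x') (y + y').
Proof. by apply/matrixP => i j; rewrite !mxE; case: (i == 0). Qed.

Lemma qubit0 : qubit 0 0 = 0 :> 'cV[C]_2.
Proof. by apply/matrixP => i j; rewrite !mxE; case: (i == 0). Qed.

Lemma P_qubit (x y : C) : Pmat U *m qubit x y = qubit (a * x + b * y) 0.
Proof.
apply/matrixP => i j; rewrite !mxE sum2 !mxE /=.
by case: (ord2 i) => -> /=; rewrite ?mul0r ?addr0.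
Qed.

Lemma Q_qubit (x y : C) : Qmat U *m qubit x y = qubit 0 (c * x + d * y).
Proof.
apply/matrixP => i j; rewrite !mxE sum2 !mxE /=.
by case: (ord2 i) => -> /=; rewrite ?mul0r ?addr0.
Qed.

Lemma PsiS n k : Ps n.+1 k = Pmat U *m Ps n (k + 1) + Qmat U *m Ps n (k - 1).
Proof. by []. Qed.

Lemma Psi_support n k : Ps n k != 0 -> exists l r : nat, (l + r)%N = n /\ k = r%:Z - l%:Z.
Proof.
elim: n k => [|n IH] k /=.
  case: (eqVneq k 0) => [->|nk]; first by exists 0%N, 0%N.
  by rewrite eqxx.
case: (eqVneq (Ps n (k + 1)) 0) => [h1|/IH[l[r[hn hk]]]]; last first.
  by exists l.+1, r; split; [rewrite addSn hn | lia].
case: (eqVneq (Ps n (k - 1)) 0) => [h2|/IH[l[r[hn hk]]]]; last first.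
  by exists l, r.+1; split; [rewrite addnS hn | lia].
by rewrite h1 h2 !mulmx0 addr0 eqxx.
Qed.

Lemma Psi_out n k : (forall l r : nat, (l + r)%N = n -> k <> r%:Z - l%:Z) -> Ps n k = 0.
Proof.
move=> H; apply/eqP; apply/negPn/negP => /Psi_support [l [r [h1 h2]]].
exact: (H l r).
Qed.

Lemma Psi_right n : Ps n.+1 n.+1 = qubit 0 (d ^+ n * v).
Proof.
elim: n => [|n IH].
  rewrite PsiS (@Psi_out 0 (1 + 1)); last by move=> l r h; lia.
  rewrite mulmx0 add0r (_ : (1 - 1 = 0 :> int)) //= Q_qubit.
  by congr qubit; rewrite ?mulr0 ?add0r ?mul1r.
rewrite PsiS (@Psi_out n.+1); last by move=> l r h; lia.
rewrite mulmx0 add0r (_ : (n.+2%:Z - 1 = n.+1)); last by lia.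
by rewrite IH Q_qubit mulr0 add0r exprS mulrA.
Qed.

Lemma Psi_left n : Ps n.+1 (- n.+1%:Z) = qubit (a ^+ n * u) 0.
Proof.
elim: n => [|n IH].
  rewrite PsiS (@Psi_out 0 (-1 - 1)); last by move=> l r h; lia.
  rewrite mulmx0 addr0 (_ : (-1 + 1 = 0 :> int)) //= P_qubit.
  by congr qubit; rewrite ?mulr0 ?add0r ?mul1r.
rewrite PsiS [Ps n.+1 (_ - 1)](@Psi_out n.+1); last by move=> l r h; lia.
rewrite mulmx0 addr0 (_ : (- n.+2%:Z + 1 = - n.+1%:Z)); last by lia.
by rewrite IH P_qubit mulr0 addr0 exprS mulrA.
Qed.

Hypotheses (a0 : a != 0) (b0 : b != 0) (c0 : c != 0) (d0 : d != 0).
Local Notation YY1 := (Y1 a b c d u v).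
Local Notation YY2 := (Y2 a b c d u v).

Lemma Psi_closed K n : (n <= K)%N -> forall l r : nat, (l + r)%N = n -> (0 < l)%N -> (0 < r)%N ->
  Ps n (r%:Z - l%:Z) = qubit (YY1 K l r) (YY2 K l r).
Proof.
elim: n => [|n IH] hK l r hn hl hr; first by lia.
have h1 : a * Ps n (r%:Z - l%:Z + 1) 0 0 + b * Ps n (r%:Z - l%:Z + 1) 1 0 = YY1 K l r.
  case: l hl hn => [//|[|l]] _ hn.
    case: r hr hn => [//|r] _ hn.
    have -> : (r.+1%:Z - 1%:Z + 1 = r.+1) by lia.
    have en : n = r.+1 by lia.
    case: K hK IH => [|K] hK IH; first by lia.
    by rewrite en Psi_right qubit00 qubit10 mulr0 add0r Y1_base.
  have -> : (r%:Z - l.+2%:Z + 1 = r%:Z - l.+1%:Z) by lia.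
  rewrite IH ?qubit00 ?qubit10; [|lia|lia|lia|lia].
  by rewrite [RHS]Y1_rec //; lia.
have h2 : c * Ps n (r%:Z - l%:Z - 1) 0 0 + d * Ps n (r%:Z - l%:Z - 1) 1 0 = YY2 K l r.
  clear h1; case: r hr hn => [//|[|r]] _ hn.
    case: l hl hn => [//|l] _ hn.
    have -> : (1%:Z - l.+1%:Z - 1 = - l.+1%:Z) by lia.
    have en : n = l.+1 by lia.
    case: K hK IH => [|K] hK IH; first by lia.
    by rewrite en Psi_left qubit00 qubit10 mulr0 addr0 Y2_base.
  have -> : (r.+2%:Z - l%:Z - 1 = r.+1%:Z - l%:Z) by lia.
  rewrite IH ?qubit00 ?qubit10; [|lia|lia|lia|lia].
  by rewrite [RHS]Y2_rec //; lia.
rewrite PsiS [Ps n (_ + 1)]qubitE [Ps n (_ - 1)]qubitE P_qubit Q_qubit qubit_add.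
by rewrite addr0 add0r h1 h2.
Qed.

Hypothesis hU : unitary U.

Lemma unit_entry (i j : 'I_2) : U i 0 * (U j 0)^* + U i 1 * (U j 1)^* = (i == j)%:R.
Proof.
have := congr1 (fun M : 'M[C]_2 => M i j) hU; rewrite /= !mxE sum2 !mxE => ->.
by [].
Qed.

Definition Dl : C := locked (d / a^*).
Lemma a'0 : a^* != 0. Proof. by rewrite conjC_eq0. Qed.
Lemma b'0 : b^* != 0. Proof. by rewrite conjC_eq0. Qed.
Lemma dE : d = Dl * a^*.
Proof. by rewrite /Dl -lock mulrC mulrCA divff ?mulr1 // a'0. Qed.
Lemma cE : c = - Dl * b^*.
Proof.
have h := unit_entry 1 0; rewrite /= mulr0n in h.
have e : c * a^* = - (d * b^*) by apply/eqP; rewrite -addr_eq0 h.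
by apply: (mulIf a'0); rewrite e dE; ring.
Qed.
Lemma Dl0 : Dl != 0.
Proof. by rewrite /Dl -lock mulf_neq0 // invr_eq0 a'0. Qed.
Lemma aa : a * a^* + b * b^* = 1.
Proof. by have := unit_entry 0 0; rewrite eqxx. Qed.
Lemma Dl'E : Dl^* = Dl^-1.
Proof.
have h : c * c^* + d * d^* = 1 by have := unit_entry 1 1; rewrite eqxx.
have e : Dl * Dl^* = 1.
  rewrite -h cE dE !rmorphM rmorphN /= !conjCK -[Dl * Dl^*]mulr1 -aa; ring.
by rewrite -[LHS]mul1r -(mulVf Dl0) -mulrA e mulr1.
Qed.
Lemma a'E : a^* = (1 - b * b^*) / a.
Proof. by rewrite -aa addrK mulrC mulKf. Qed.
Lemma c'E : c^* = - b / Dl.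
Proof. by rewrite cE rmorphM rmorphN /= conjCK Dl'E mulNr mulNr mulrC. Qed.
Lemma d'E : d^* = a / Dl.
Proof. by rewrite dE rmorphM /= conjCK Dl'E mulrC. Qed.
Lemma dd : d * d^* = a * a^*.
Proof. rewrite d'E dE; field; by rewrite Dl0. Qed.

Definition rr : C := - (`|b| ^+ 2 / `|a| ^+ 2).
Lemma rhoE : rho a b c d = rr.
Proof. rewrite /rho /rr !normCK cE dE; field; by rewrite ?a0 ?Dl0 ?a'0. Qed.
Lemma rr_conj : rr^* = rr.
Proof. by rewrite /rr rmorphN fmorph_div !rmorphXn /= !conj_normC. Qed.

Definition Wt l r g : C := rr ^+ g.+1 * ('C(l.-1, g) * 'C(r.-1, g))%:R.
Definition F1 l g : C := u * ((l.-1 - g)%:R / (g.+1)%:R) + a / c * v.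
Definition F2 r g : C := v * ((r.-1 - g)%:R / (g.+1)%:R) + d / b * u.

Lemma binE n g : ('C(n, g.+1))%:R = ('C(n, g))%:R * ((n - g)%:R / (g.+1)%:R) :> C.
Proof.
have gn0 : (g.+1)%:R != 0 :> C by rewrite pnatr_eq0.
rewrite -[LHS](mulKf gn0) -natrM mul_bin_left natrM; ring.
Qed.

Lemma T1 K l r : u * S1 a b c d K l r + a / c * v * S0 a b c d K l r = \sum_(g < K) Wt l r g * F1 l g.
Proof.
rewrite /S1 /S0 rhoE mulr_sumr [X in _ + X]mulr_sumr -big_split; apply: eq_bigr => g _ /=.
rewrite /Wt /F1 !natrM binE; ring.
Qed.

Lemma T2 K l r : v * S2 a b c d K l r + d / b * u * S0 a b c d K l r = \sum_(g < K) Wt l r g * F2 r g.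
Proof.
rewrite /S2 /S0 rhoE mulr_sumr [X in _ + X]mulr_sumr -big_split; apply: eq_bigr => g _ /=.
rewrite /Wt /F2 !natrM binE; ring.
Qed.

Lemma Wt_conj l r g : (Wt l r g)^* = Wt l r g.
Proof. by rewrite /Wt rmorphM rmorphXn /= rr_conj conjC_nat. Qed.

Lemma normsum K (w f : 'I_K -> C) X : (forall g, (w g)^* = w g) ->
  (X * \sum_g w g * f g) * (X * \sum_g w g * f g)^* =
  X * X^* * \sum_g \sum_h w g * w h * (f g * (f h)^*).
Proof.
move=> hw; rewrite rmorphM rmorph_sum /=.
have -> : \sum_i (w i * f i)^* = \sum_i w i * (f i)^*.
  by apply: eq_bigr => i _; rewrite rmorphM /= hw.
rewrite mulrACA big_distrlr /=; congr (_ * _); apply: eq_bigr => g _; apply: eq_bigr => h _; ring.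
Qed.

Lemma powconj k j : (a ^+ k * d ^+ j) * (a ^+ k * d ^+ j)^* = (`|a| ^+ 2) ^+ (k + j).
Proof. by rewrite rmorphM !rmorphXn /= mulrACA -!exprMn dd exprD normCK. Qed.

Lemma prob_lr l r : (0 < l)%N -> (0 < r)%N ->
  prob U phi (l + r) (r%:Z - l%:Z) = (`|a| ^+ 2) ^+ (l + r).-1 *
  \sum_(g < l + r) \sum_(h < l + r) Wt l r g * Wt l r h * (F1 l g * (F1 l h)^* + F2 r g * (F2 r h)^*).
Proof.
move=> hl hr; rewrite /prob sum2 (Psi_closed (K := (l + r)%N) (leqnn _)) // qubit00 qubit10.
rewrite /Y1 /Y2 T1 T2 !normCK !normsum; try by move=> g; rewrite Wt_conj.
rewrite !powconj (_ : (l.-1 + r = (l + r).-1)%N); last by lia.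
rewrite (_ : (l + r.-1 = (l + r).-1)%N); last by lia.
rewrite -mulrDr -big_split /=; congr (_ * _); first by rewrite normCK.
apply: eq_bigr => g _.
rewrite -big_split /=; apply: eq_bigr => h _; ring.
Qed.

Lemma natB1 l g : (g < l)%N -> (l.-1 - g)%:R = l%:R - (g.+1)%:R :> C.
Proof. by move=> h; rewrite -natrB; [congr (_%:R); lia | lia]. Qed.

Local Notation EG := (Egen a a^* b b^* c c^* d d^* al al^* be be^*).

Lemma FF_Egen l r g h : (g < l)%N -> (h < l)%N -> (g < r)%N -> (h < r)%N ->
  F1 l g * (F1 l h)^* + F2 r g * (F2 r h)^* = EG l%:R r%:R (g.+1)%:R (h.+1)%:R.
Proof.
move=> h1 h2 h3 h4; rewrite /F1 /F2 !natB1 //.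
rewrite !(rmorphD, rmorphN, rmorphM, rmorphB, fmorphV) /= !conjC_nat.
by [].
Qed.

Lemma sum_restrict n k (hk : (k <= n)%N) (G : 'I_n -> C) :
  (forall g : 'I_n, (k <= g)%N -> G g = 0) -> \sum_(g < n) G g = \sum_(g < k) G (widen_ord hk g).
Proof.
move=> hG; rewrite -(big_ord_narrow hk) [RHS]big_mkcond; apply: eq_bigr => g _.
by case: ifP => // /negbT; rewrite -leqNgt => /hG ->.
Qed.

Lemma Wt0 l r k g : (k = l \/ k = r) -> (0 < l)%N -> (0 < r)%N -> (k <= g)%N -> Wt l r g = 0.
Proof.
move=> hk hl hr hg; rewrite /Wt.
case: hk => hk.
  by rewrite (bin_small (n := l.-1)) ?mul0n ?mulr0 //; lia.
by rewrite (bin_small (n := r.-1) (m := g)) ?muln0 ?mulr0 //; lia.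
Qed.

Lemma prob_restr l r k : (0 < l)%N -> (0 < r)%N -> (k <= l)%N -> (k <= r)%N -> (k = l \/ k = r) ->
  prob U phi (l + r) (r%:Z - l%:Z) = (`|a| ^+ 2) ^+ (l + r).-1 *
  \sum_(g < k) \sum_(h < k) Wt l r g * Wt l r h * EG l%:R r%:R (g.+1)%:R (h.+1)%:R.
Proof.
move=> hl hr hkl hkr hk; rewrite prob_lr //; congr (_ * _).
have hkn : (k <= l + r)%N by lia.
rewrite (sum_restrict hkn); last first.
  by move=> g hg; rewrite big1 // => h _; rewrite (Wt0 hk) // !mul0r.
apply: eq_bigr => g _ /=.
rewrite (sum_restrict hkn); last first.
  by move=> h hh; rewrite (Wt0 (g := h) hk) // mulr0 mul0r.
apply: eq_bigr => h _ /=.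
have := ltn_ord g; have := ltn_ord h => ? ?.
by rewrite FF_Egen //; lia.
Qed.

Lemma symsum k (f t : 'I_k -> 'I_k -> C) : (forall g h, f g h + f h g = 2 * t g h) ->
  \sum_g \sum_h f g h = \sum_g \sum_h t g h.
Proof.
move=> hf; have two0 : (2 : C) != 0 by rewrite pnatr_eq0.
apply: (mulfI two0); rewrite mulr_natl mulr2n [X in _ + X]exchange_big -big_split /=.
rewrite mulr_sumr; apply: eq_bigr => g _; rewrite -big_split mulr_sumr; apply: eq_bigr => h _.
exact: hf.
Qed.

Hypothesis hn : `|al| ^+ 2 + `|be| ^+ 2 = 1.
Lemma hn' : al * al^* + be * be^* = 1. Proof. by rewrite -!normCK. Qed.

Lemma even_sym L Rr g h : g != 0 -> h != 0 ->
  (EG L Rr g h + EG Rr L g h) + (EG L Rr h g + EG Rr L h g) =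
  2 * ((Rr ^+ 2 + L ^+ 2 - (L + Rr) * (g + h) + 2 * (g * h) / (b * b^*)) / (g * h)).
Proof.
move=> g0 h0; rewrite -(even_gen a0 b0 b'0 Dl0 a'E cE dE c'E d'E L Rr g0 h0 hn'); ring.
Qed.

Lemma odd_sym L Rr g h : g != 0 -> h != 0 ->
  (EG L Rr g h - EG Rr L g h) + (EG L Rr h g - EG Rr L h g) =
  2 * ((Rr - L) * (- ((L + Rr) * (a * a^* - b * b^*) + (g + h)) * (al * al^* - be * be^*)
      + ((g + h) / (b * b^*) - 2 * (L + Rr)) * (a * al * (b^* * be^*) + a^* * al^* * (b * be))) / (g * h)).
Proof.
move=> g0 h0; rewrite -(odd_gen al al^* be be^* a0 b0 b'0 Dl0 a'E cE dE c'E d'E L Rr g0 h0); ring.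
Qed.

Lemma Wt_sym l r g : Wt l r g = Wt r l g.
Proof. by rewrite /Wt mulnC. Qed.

Lemma posE n k : (k.*2 < n)%N -> ((n - k)%N%:Z - k%:Z = (n - 2 * k)%N%:Z) /\ (k%:Z - (n - k)%N%:Z = - (n - 2 * k)%N%:Z).
Proof. by move=> h; split; lia. Qed.

Lemma pair_even n k : (0 < k)%N -> (k.*2 < n)%N ->
  prob U phi n (n - 2 * k)%N + prob U phi n (- (n - 2 * k)%N%:Z) =
  (`|a| ^+ 2) ^+ n.-1 * \sum_(g < k) \sum_(h < k) Wt k (n - k) g * Wt k (n - k) h *
   (((n - k)%:R ^+ 2 + k%:R ^+ 2 - (k%:R + (n - k)%:R) * ((g.+1)%:R + (h.+1)%:R)
     + 2 * ((g.+1)%:R * (h.+1)%:R) / (b * b^*)) / ((g.+1)%:R * (h.+1)%:R)).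
Proof.
move=> hk hkn; have [e1 e2] := posE hkn.
have P1 := @prob_restr k (n - k) k; rewrite (_ : (k + (n - k))%N = n) in P1; last by lia.
have P2 := @prob_restr (n - k) k k; rewrite (_ : ((n - k) + k)%N = n) in P2; last by lia.
rewrite -e2 -e1 P1 ?P2; try lia.
rewrite -mulrDr -big_split /=; congr (_ * _).
rewrite (eq_bigr (fun g : 'I_k => \sum_(h < k) Wt k (n - k) g * Wt k (n - k) h *
  (EG k%:R (n - k)%:R (g.+1)%:R (h.+1)%:R + EG (n - k)%:R k%:R (g.+1)%:R (h.+1)%:R))); last first.
  move=> g _; rewrite -big_split; apply: eq_bigr => h _ /=.
  by rewrite !(Wt_sym (n - k)) -mulrDr.
apply: symsum => g h.
rewrite (mulrC (Wt _ _ h)) -mulrDr even_sym ?pnatr_eq0 //.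
by rewrite mulrCA.
Qed.

Lemma pair_odd n k : (0 < k)%N -> (k.*2 < n)%N ->
  prob U phi n (n - 2 * k)%N - prob U phi n (- (n - 2 * k)%N%:Z) =
  (`|a| ^+ 2) ^+ n.-1 * \sum_(g < k) \sum_(h < k) Wt k (n - k) g * Wt k (n - k) h *
   (((n - k)%:R - k%:R) * (- ((k%:R + (n - k)%:R) * (a * a^* - b * b^*) + ((g.+1)%:R + (h.+1)%:R))
        * (al * al^* - be * be^*)
      + (((g.+1)%:R + (h.+1)%:R) / (b * b^*) - 2 * (k%:R + (n - k)%:R))
        * (a * al * (b^* * be^*) + a^* * al^* * (b * be))) / ((g.+1)%:R * (h.+1)%:R)).
Proof.
move=> hk hkn; have [e1 e2] := posE hkn.
have P1 := @prob_restr k (n - k) k; rewrite (_ : (k + (n - k))%N = n) in P1; last by lia.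
have P2 := @prob_restr (n - k) k k; rewrite (_ : ((n - k) + k)%N = n) in P2; last by lia.
rewrite -e2 -e1 P1 ?P2; try lia.
rewrite -mulrBr -sumrB /=; congr (_ * _).
rewrite (eq_bigr (fun g : 'I_k => \sum_(h < k) Wt k (n - k) g * Wt k (n - k) h *
  (EG k%:R (n - k)%:R (g.+1)%:R (h.+1)%:R - EG (n - k)%:R k%:R (g.+1)%:R (h.+1)%:R))); last first.
  move=> g _; rewrite -sumrB; apply: eq_bigr => h _ /=.
  by rewrite !(Wt_sym (n - k)) -mulrBr.
apply: symsum => g h.
rewrite (mulrC (Wt _ _ h)) -mulrDr odd_sym ?pnatr_eq0 //.
by rewrite mulrCA.
Qed.

Lemma uconj : u^* = a^* * al^* + b^* * be^*.
Proof. by rewrite !(rmorphD, rmorphM). Qed.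
Lemma vconj : v^* = c^* * al^* + d^* * be^*.
Proof. by rewrite !(rmorphD, rmorphM). Qed.

Lemma prob_right n : prob U phi n.+1 n.+1 = (`|a| ^+ 2) ^+ n * (v * v^*).
Proof.
rewrite /prob sum2 Psi_right qubit00 qubit10 normr0 expr0n /= add0r normCK.
by rewrite rmorphM rmorphXn /= mulrACA -exprMn dd normCK.
Qed.

Lemma prob_left n : prob U phi n.+1 (- n.+1%:Z) = (`|a| ^+ 2) ^+ n * (u * u^*).
Proof.
rewrite /prob sum2 Psi_left qubit00 qubit10 normr0 expr0n /= addr0 normCK.
by rewrite rmorphM rmorphXn /= mulrACA -exprMn normCK.
Qed.

Lemma edge_sum n : prob U phi n.+1 n.+1 + prob U phi n.+1 (- n.+1%:Z) = (`|a| ^+ 2) ^+ n.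
Proof.
rewrite prob_right prob_left -mulrDr addrC uconj vconj.
by rewrite (edge_even a0 Dl0 a'E cE dE c'E d'E hn') mulr1.
Qed.

Lemma edge_diff n : prob U phi n.+1 n.+1 - prob U phi n.+1 (- n.+1%:Z) = (`|a| ^+ 2) ^+ n *
  - ((a * a^* - b * b^*) * (al * al^* - be * be^*) + 2 * (a * al * (b^* * be^*) + a^* * al^* * (b * be))).
Proof.
rewrite prob_right prob_left -mulrBr uconj vconj.
by rewrite (edge_odd al al^* be be^* a0 Dl0 a'E cE dE c'E d'E).
Qed.

Lemma prob0 n k : Ps n k = 0 -> prob U phi n k = 0.
Proof. by move=> H; rewrite /prob H big1 // => i _; rewrite mxE normr0 expr0n. Qed.

Definition gfun (m n : nat) (x : int) : C := (x%:~R : C) ^+ m * prob U phi n x.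
Definition hfun (m n : nat) (y : nat) : C := gfun m n y%:Z + gfun m n (- y%:Z).

Lemma negpow m (x : C) : (- x) ^+ m = (-1) ^+ (odd m) * x ^+ m.
Proof. by rewrite signr_odd; exact: exprNn. Qed.

Lemma hfunE m n y : hfun m n y = (y%:R ^+ m) * (prob U phi n y%:Z + (-1) ^+ (odd m) * prob U phi n (- y%:Z)).
Proof.
rewrite /hfun /gfun mulrNz negpow (_ : (y%:Z)%:~R = y%:R :> C) //; ring.
Qed.

Lemma window_reduce m n N : (0 < m)%N -> (0 < n)%N -> (n <= N)%N ->
  moment_window U phi n m N = \sum_(k < ((n - 1)./2).+1) hfun m n (n - 2 * k)%N.
Proof.
move=> hm hn1 hnN.
have -> : moment_window U phi n m N = \sum_(j < (N + N).+1) gfun m n (j%:Z - N%:Z) by [].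
rewrite window.
have -> : gfun m n 0 = 0 by rewrite /gfun expr0n; case: m hm => // m _; rewrite mul0r.
rewrite add0r.
have -> : \sum_(x < N) (gfun m n x.+1 + gfun m n (- x.+1%:Z)) = \sum_(x < N) hfun m n x.+1 by [].
rewrite (sum_restrict hnN); last first.
  move=> g hg; rewrite /hfun /gfun !prob0 ?mulr0 ?addr0 //; apply: Psi_out => l r hlr; lia.
rewrite /=; apply: pairing => // x hx.
case: (eqVneq x 0) => [->|x0]; first by rewrite /hfun /gfun expr0n; case: m hm => // m _; rewrite !mul0r addr0.
rewrite /hfun /gfun !prob0 ?mulr0 ?addr0 //; apply: Psi_out => l r hlr he.
- have : (x + n = r + r)%N by lia.
  by move=> e; move: hx; rewrite addnC e addnn odd_double.
- have : (x + n = l + l)%N by lia.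
  by move=> e; move: hx; rewrite addnC e addnn odd_double.
Qed.

Lemma CcoefE n k g h : Ccoef a b n k g.+1 h.+1 = Wt k (n - k) g * Wt k (n - k) h.
Proof. rewrite /Ccoef /Wt /= exprD -!subn1 !natrM /rr; ring. Qed.

Lemma perk_even m n k : ~~ odd m -> (0 < k)%N -> (k.*2 < n)%N ->
  hfun m n (n - 2 * k)%N = (`|a| ^+ 2) ^+ n.-1 *
  \sum_(1 <= g < k.+1) \sum_(1 <= d < k.+1)
    Ccoef a b n k g d * ((n - 2 * k)%:R ^+ m / (g * d)%:R) *
    ((n - k)%:R ^+ 2 + k%:R ^+ 2 - n%:R * (g + d)%:R + 2 * (g * d)%:R / `|b| ^+ 2).
Proof.
move=> hmo hk hkn; rewrite hfunE (negbTE hmo) expr0 mul1r pair_even //.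
rewrite big_add1 /= big_mkord.
under [in RHS]eq_bigr do rewrite big_add1 /= big_mkord.
rewrite mulrCA; congr (_ * _); rewrite mulr_sumr; apply: eq_bigr => g _.
rewrite mulr_sumr; apply: eq_bigr => h _; rewrite CcoefE.
have en : n%:R = k%:R + (n - k)%:R :> C by rewrite -natrD; congr (_ %:R); lia.
rewrite en !natrD !natrM normCK.
field.
by rewrite /= ?conjC_eq0 b0 (addrC 1 h%:R) (addrC 1 g%:R) !natr1 !pnatr_eq0.
Qed.

Lemma main_even m n N : ~~ odd m -> (0 < m)%N -> (0 < n)%N -> (n <= N)%N ->
  moment_window U phi n m N = even_moment a b n m.
Proof.
move=> hmo hm hn1 hnN; rewrite window_reduce // /even_moment /=.
rewrite big_add1 /= big_mkord.
rewrite big_ord_recl muln0 subn0 mulrDr mulr_sumr; congr (_ + _).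
  case: n hn1 {hnN} => // n _.
  by rewrite hfunE (negbTE hmo) expr0 mul1r edge_sum mulrC.
apply: eq_bigr => i _; rewrite lift0 perk_even //.
by move: (ltn_ord i); rewrite gtn_half_double -!muln2; lia.
Qed.

Lemma perk_odd m n k : odd m -> (0 < k)%N -> (k.*2 < n)%N ->
  hfun m n (n - 2 * k)%N = (`|a| ^+ 2) ^+ n.-1 *
  \sum_(1 <= g < k.+1) \sum_(1 <= d < k.+1)
    Ccoef a b n k g d * ((n - 2 * k)%:R ^+ m.+1 / (g * d)%:R) *
    (- (n%:R * (`|a| ^+ 2 - `|b| ^+ 2) + (g + d)%:R) * (`|al| ^+ 2 - `|be| ^+ 2)
     + ((g + d)%:R / `|b| ^+ 2 - 2 * n%:R) * Rephi a b al be).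
Proof.
move=> hmo hk hkn; rewrite hfunE hmo expr1 mulN1r pair_odd //.
rewrite big_add1 /= big_mkord.
under [in RHS]eq_bigr do rewrite big_add1 /= big_mkord.
rewrite mulrCA; congr (_ * _); rewrite mulr_sumr; apply: eq_bigr => g _.
rewrite mulr_sumr; apply: eq_bigr => h _; rewrite CcoefE.
have en : n%:R = k%:R + (n - k)%:R :> C by rewrite -natrD; congr (_ %:R); lia.
have ex : (n - 2 * k)%:R = (n - k)%:R - k%:R :> C by rewrite -natrB; [congr (_ %:R); lia | lia].
rewrite ex en /Rephi !rmorphM /= !natrD !natrM !normCK exprS.
field.
by rewrite /= ?conjC_eq0 b0 (addrC 1 h%:R) (addrC 1 g%:R) !natr1 !pnatr_eq0.
Qed.

Lemma main_odd m n N : odd m -> (0 < m)%N -> (0 < n)%N -> (n <= N)%N ->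
  moment_window U phi n m N = odd_moment a b al be n m.
Proof.
move=> hmo hm hn1 hnN; rewrite window_reduce // /odd_moment /=.
rewrite big_add1 /= big_mkord.
rewrite big_ord_recl muln0 subn0 mulrDr mulr_sumr; congr (_ + _).
  case: n hn1 {hnN} => // n _.
  rewrite hfunE hmo expr1 mulN1r edge_diff /Rephi !rmorphM /= !normCK; ring.
apply: eq_bigr => i _; rewrite lift0 perk_odd //.
by move: (ltn_ord i); rewrite gtn_half_double -!muln2; lia.
Qed.
End QWP.

Unset Implicit Arguments.

Theorem proposition2 (R : rcfType) (U : 'M[R[i]]_2) (alpha beta : R[i]) (n m : nat) :
  unitary U ->
  U 0 0 * U 0 1 * U 1 0 * U 1 1 != 0 ->
  `|alpha| ^+ 2 + `|beta| ^+ 2 = 1 ->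
  (1 <= n)%N -> (1 <= m)%N ->
  [/\ (odd m -> forall N : nat, (n <= N)%N ->
         moment_window U (qubit alpha beta) n m N
         = odd_moment (U 0 0) (U 0 1) alpha beta n m),
      (~~ odd m -> forall N : nat, (n <= N)%N ->
         moment_window U (qubit alpha beta) n m N = even_moment (U 0 0) (U 0 1) n m)
    & (~~ odd m -> forall (alpha' beta' : R[i]) (N : nat), (n <= N)%N ->
         `|alpha'| ^+ 2 + `|beta'| ^+ 2 = 1 ->
         moment_window U (qubit alpha' beta') n m N
         = moment_window U (qubit alpha beta) n m N)].
Proof.
move=> hU habcd hn hn1 hm1.
have [a0 b0 c0 d0] : [/\ U 0 0 != 0, U 0 1 != 0, U 1 0 != 0 & U 1 1 != 0].
  move: habcd; rewrite !mulf_eq0 !negb_or => /andP[/andP[/andP[? ?] ?] ?]; by split.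
split.
- move=> hmo N hN; exact: (main_odd alpha beta a0 b0 c0 d0 hU hmo hm1 hn1 hN).
- move=> hmo N hN; exact: (main_even a0 b0 c0 d0 hU hn hmo hm1 hn1 hN).
- move=> hmo al' be' N hN hn'.
  by rewrite (main_even a0 b0 c0 d0 hU hn' hmo hm1 hn1 hN) (main_even a0 b0 c0 d0 hU hn hmo hm1 hn1 hN).
Qed.
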